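(* Let $K$ be a number field with $\sqrt{2}\in K$. Then there are infinitely many points $(x,y)\in K^2$ such that each of the squared distances $x^2+y^2$, $x^2+(1-y)^2$, $(1-x)^2+y^2$, $(1-x)^2+(1-y)^2$ to the vertices $(0,0),(0,1),(1,0),(1,1)$ of the unit square is the square of an element of $K$.
   Context: A distance is called $K$-rational if it lies in $K$. For a point with coordinates in $K$, the distance to a vertex of the unit square is $K$-rational exactly when the corresponding squared distance is the square of an element of $K$. *)

(* Defs.v *)
From HB Require Import structures.
From mathcomp Require Import all_boot all_order all_algebra all_field.
Set Implicit Arguments. Unset Strict Implicit. Unset Printing Implicit Defensive.
Import GRing.Theory.
Local Open Scope ring_scope.

(* A number field is modelled as K : fieldExtType rat, i.e. a field that is a
   finite-dimensional algebra over Q. *)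

Definition is_square (K : fieldType) (a : K) : Prop := exists b : K, a = b ^+ 2.

Definition unit_square_rational (K : fieldType) (p : K * K) : Prop :=
  let x := p.1 in let y := p.2 in
  [/\ is_square (x ^+ 2 + y ^+ 2),
      is_square (x ^+ 2 + (1 - y) ^+ 2),
      is_square ((1 - x) ^+ 2 + y ^+ 2) &
      is_square ((1 - x) ^+ 2 + (1 - y) ^+ 2)].

Definition infinitely_many (T : eqType) (P : T -> Prop) : Prop :=
  ~ exists s : seq T, forall t, P t -> t \in s.

(* Main.v *)
Require Import Defs.
From HB Require Import structures.
From mathcomp Require Import all_boot all_order all_algebra all_field.
From mathcomp Require Import ring.
Local Open Scope ring_scope.
Import GRing.Theory Num.Theory.

Lemma natK_inj (K : fieldExtType rat) (m n : nat) :
  (m%:R : K) = n%:R -> m = n.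
Proof.
move=> h.
have e : forall k : nat, (k%:R : K) = (k%:R : rat) *: 1 by move=> k; rewrite scaler_nat.
move: h; rewrite !e => /eqP; rewrite -subr_eq0 -scalerBl scaler_eq0 oner_eq0 orbF.
by rewrite subr_eq0 eqr_nat => /eqP.
Qed.

Lemma natK_neq0 (K : fieldExtType rat) (m : nat) : (0 < m)%N -> (m%:R : K) != 0.
Proof.
move=> hm; apply/eqP=> h.
have e : m = 0%N by apply: (@natK_inj K); rewrite h.
by rewrite e in hm.
Qed.

Definition pt (K : fieldExtType rat) (m : nat) : K * K :=
  let M := (m%:R : K) in
  let x := M * (M + 2) / (M ^+ 2 + 4 * M + 2) in (x, x).

Lemma den_neq0 (K : fieldExtType rat) (m : nat) :
  ((m%:R : K) ^+ 2 + 4 * m%:R + 2) != 0.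
Proof.
have -> : ((m%:R : K) ^+ 2 + 4 * m%:R + 2) = (m * m + 4 * m + 2)%N%:R.
  by rewrite !natrD !natrM; ring.
by apply: natK_neq0; rewrite !addnS.
Qed.

Lemma pt_inj (K : fieldExtType rat) : injective (@pt K).
Proof.
move=> m n [] h.
have dm := den_neq0 K m; have dn := den_neq0 K n.
set M := (m%:R : K) in h dm; set N := (n%:R : K) in h dn.
have h2 : M * (M + 2) * (N ^+ 2 + 4 * N + 2) = N * (N + 2) * (M ^+ 2 + 4 * M + 2).
  have e1 : M * (M + 2) = M * (M + 2) / (M ^+ 2 + 4 * M + 2) * (M ^+ 2 + 4 * M + 2) by rewrite mulfVK.
  have e2 : N * (N + 2) = M * (M + 2) / (M ^+ 2 + 4 * M + 2) * (N ^+ 2 + 4 * N + 2) by rewrite h mulfVK.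
  rewrite {1}e1 e2; ring.
have h3 : 2 * (M - N) * (M * N + M + N + 2) = 0.
  have -> : 2 * (M - N) * (M * N + M + N + 2) = M * (M + 2) * (N ^+ 2 + 4 * N + 2) - N * (N + 2) * (M ^+ 2 + 4 * M + 2) by ring.
  by rewrite h2 subrr.
have hq : (M * N + M + N + 2) = (m * n + m + n + 2)%N%:R by rewrite !natrD natrM.
have n2 : (2 : K) != 0 by apply: (@natK_neq0 K 2).
have nq : ((m * n + m + n + 2)%N%:R : K) != 0 by apply: natK_neq0; rewrite !addnS.
move/eqP: h3; rewrite hq !mulf_eq0 (negPf n2) (negPf nq) /= orbF.
by rewrite subr_eq0 => /eqP /natK_inj.
Qed.

Lemma pt_ok (K : fieldExtType rat) (s : K) (hs : s ^+ 2 = 2) (m : nat) :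
  unit_square_rational (pt K m).
Proof.
have d := den_neq0 K m.
rewrite /unit_square_rational /pt /=.
set M := (m%:R : K) in d *; set D := (M ^+ 2 + 4 * M + 2) in d *.
have e1 : 1 - M * (M + 2) / D = 2 * (M + 1) / D.
  by apply: (mulIf d); rewrite mulrBl mulfVK // mul1r mulfVK // /D; ring.
rewrite e1.
split.
- exists (s * (M * (M + 2) / D)); rewrite [in RHS]exprMn hs; ring.
- exists ((M ^+ 2 + 2 * M + 2) / D); apply: (mulIf (expf_neq0 2 d)).
  rewrite !expr_div_n !mulrDl !mulfVK ?expf_neq0 //; ring.
- exists ((M ^+ 2 + 2 * M + 2) / D); apply: (mulIf (expf_neq0 2 d)).
  rewrite !expr_div_n !mulrDl !mulfVK ?expf_neq0 //; ring.
- exists (s * (2 * (M + 1) / D)); rewrite [in RHS]exprMn hs; ring.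
Qed.

Theorem theorem2p2 (K : fieldExtType rat)
  (hsqrt2 : exists s : K, s ^+ 2 = 2) :
  infinitely_many (@unit_square_rational K).
Proof.
case: hsqrt2 => s hs [l hl].
have hu : uniq (map (@pt K) (iota 0 (size l).+1)).
  by rewrite map_inj_uniq ?iota_uniq //; apply: pt_inj.
have hsub : {subset map (@pt K) (iota 0 (size l).+1) <= l}.
  by move=> t /mapP [m _ ->]; apply: hl; apply: pt_ok hs m.
have := uniq_leq_size hu hsub.
by rewrite size_map size_iota ltnn.
Qed.
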